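(* Let $f$ be a measurable map preserving a probability measure $\mu$, and fix $\tau>0$. Let $(U_n)$, $(V_n)$ be nested sequences of measurable sets with $V_n\subset U_n$, $\mu(V_n)>0$, $\mu(U_n)\to0$, and $\mu(U_n\setminus V_n)/\mu(U_n)\to0$ as $n\to\infty$. Then for every $k\in\mathbb{N}_0$, $$\big|\mu(\zeta_{U_n}=k)-\mu(\zeta_{V_n}=k)\big|\to0\quad\text{as }n\to\infty.$$
   Context: For a set $W$ of positive measure, $\zeta_W=\sum_{0\le j<\tau/\mu(W)}\mathbb{I}_W\circ f^j$. *)

(* Defs.v *)
From HB Require Import structures.
From mathcomp Require Import all_boot all_order all_algebra.
From mathcomp Require Import all_classical all_reals all_analysis.
Set Implicit Arguments. Unset Strict Implicit. Unset Printing Implicit Defensive.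
Import Order.TTheory GRing.Theory Num.Theory.
Local Open Scope classical_set_scope.
Local Open Scope ring_scope.

(* Number of naturals j with 0 <= j < x, for x > 0: equals ceil x
   (an integer j satisfies j < x iff j < ceil x). *)
Definition nb_below (R : realType) (x : R) : nat := `|Num.ceil x|%N.

Definition zeta (d : measure_display) (T : measurableType d) (R : realType)
  (mu : {measure set T -> \bar R}) (f : T -> T) (tau : R) (W : set T) (x : T) : R :=
  \sum_(j < nb_below (tau / fine (mu W))) (\1_W (iter j f x) : R).

(* Main.v *)
Require Import Defs.
From HB Require Import structures.
From mathcomp Require Import all_boot all_order all_algebra.
From mathcomp Require Import all_classical all_reals all_analysis.
From mathcomp Require Import lra.
Import Order.TTheory GRing.Theory Num.Theory.
Local Open Scope classical_set_scope.
Local Open Scope ring_scope.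
Set Implicit Arguments. Unset Strict Implicit.

Lemma iter_mfun (d : measure_display) (T : measurableType d) (f : T -> T) :
  measurable_fun setT f -> forall j, measurable_fun setT (iter j f).
Proof.
move=> mf; elim=> [|j IH] /=; first exact: measurable_id.
exact: (measurableT_comp mf IH).
Qed.

Lemma iter_pre_meas (d : measure_display) (T : measurableType d) (f : T -> T) j A :
  measurable_fun setT f -> measurable A -> measurable (iter j f @^-1` A).
Proof.
move=> mf mA; have := iter_mfun mf j measurableT mA; by rewrite setTI.
Qed.

Lemma iter_pre_mu (d : measure_display) (T : measurableType d) (R : realType)
  (mu : probability T R) (f : T -> T) :
  measurable_fun setT f ->
  (forall A, measurable A -> mu (f @^-1` A) = mu A) ->
  forall j A, measurable A -> mu (iter j f @^-1` A) = mu A.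
Proof.
move=> mf inv; elim=> [|j IH] A mA //=.
have -> : iter j.+1 f @^-1` A = iter j f @^-1` (f @^-1` A) by [].
rewrite IH ?inv //.
have := mf measurableT _ mA; by rewrite setTI.
Qed.

Lemma zeta_meas (d : measure_display) (T : measurableType d) (R : realType)
  (mu : probability T R) (f : T -> T) (tau : R) (W : set T) (r : R) :
  measurable_fun setT f -> measurable W ->
  measurable [set x | zeta mu f tau W x = r].
Proof.
move=> mf mW.
have mz : measurable_fun setT (zeta mu f tau W).
  rewrite /zeta; apply: measurable_sum => j.
  have := measurableT_comp (measurable_realfun.measurable_indic (D:=setT) (R:=R) mW) (iter_mfun mf j).
  by [].
have := mz measurableT _ (measurable_set1 r); rewrite setTI.
by congr measurable.
Qed.

Lemma nb_below_bounds (R : realType) (x : R) : 0 <= x ->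
  x <= (nb_below x)%:R /\ (nb_below x)%:R < x + 1.
Proof.
move=> x0; rewrite /nb_below natr_absz ger0_norm; last first.
  by rewrite ceil_ge0 (lt_le_trans _ x0) // ltrN10.
have := ceil_itv x; rewrite intrD /= => /andP[h1 h2]; split=> //.
by rewrite -ltrBlDr.
Qed.

Lemma pointwise (d : measure_display) (T : measurableType d) (R : realType)
  (mu : probability T R) (f : T -> T) (tau : R) (U V : set T) (k : nat) :
  measurable_fun setT f ->
  (forall A, measurable A -> mu (f @^-1` A) = mu A) ->
  0 < tau -> measurable U -> measurable V -> V `<=` U -> (0 < mu V)%E ->
  `| fine (mu [set x | zeta mu f tau U x = k%:R])
     - fine (mu [set x | zeta mu f tau V x = k%:R]) |
    <= 2 * tau * (fine (mu (U `\` V)) / fine (mu U)) + fine (mu U).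
Proof.
move=> mf inv tau0 mU mV VU mV0.
have mUV : measurable (U `\` V) by exact: measurableD.
have hU : mu U = (fine (mu U))%:E by rewrite fineK // fin_num_measure.
have hV : mu V = (fine (mu V))%:E by rewrite fineK // fin_num_measure.
have hUV : mu (U `\` V) = (fine (mu (U `\` V)))%:E by rewrite fineK // fin_num_measure.
set a := fine (mu U) in hU *; set b := fine (mu V) in hV *;
set c := fine (mu (U `\` V)) in hUV *.
have b0 : 0 < b by rewrite -lte_fin -hV.
have c0 : 0 <= c by rewrite -lee_fin -hUV.
have ba : b <= a by rewrite -lee_fin -hU -hV; apply: le_measure => //; rewrite inE.
have abc : a = b + c.
  apply/EFin_inj; rewrite EFinD -hU -hV -hUV -measureU //.
    by congr (mu _); rewrite setDUK.
  by apply/seteqP; split => x //= [? []].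
have a0 : 0 < a by lra.
set NU := nb_below (tau / a); set NV := nb_below (tau / b).
have [p1 p2] : tau / a <= NU%:R /\ NU%:R < tau / a + 1.
  by apply: nb_below_bounds; rewrite divr_ge0 // ltW.
have [q1 q2] : tau / b <= NV%:R /\ NV%:R < tau / b + 1.
  by apply: nb_below_bounds; rewrite divr_ge0 // ltW.
have pa : tau / a * a = tau by rewrite mulfVK // gt_eqF.
have qb : tau / b * b = tau by rewrite mulfVK // gt_eqF.
have ra : c / a * a = c by rewrite mulfVK // gt_eqF.
have pq : tau / a <= tau / b.
  have : 0 <= (tau / b - tau / a) * b by nra.
  by rewrite pmulr_lge0 // subr_ge0.
have NUV : (NU <= NV)%N.
  rewrite /NU /NV /nb_below -(ler_nat R) !natr_absz !ger0_norm ?ler_int ?le_ceil //.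
    by rewrite ceil_ge0 (lt_le_trans _ (divr_ge0 (ltW tau0) (ltW b0))) // ltrN10.
  by rewrite ceil_ge0 (lt_le_trans _ (divr_ge0 (ltW tau0) (ltW a0))) // ltrN10.
pose G j := iter j f @^-1` (if (j < NU)%N then U `\` V else V).
have mG j : measurable (G j).
  by apply: iter_pre_meas => //; case: ifP.
pose E := \bigcup_(j in `I_NV) G j.
have mE : measurable E by apply: bigcup_measurable => j _.
have hE : mu E = (fine (mu E))%:E by rewrite fineK // fin_num_measure.
have keyE : fine (mu E) <= c * NU%:R + b * (NV%:R - NU%:R).
  rewrite -lee_fin -hE.
  have := @content_subadditive _ _ _ mu E G NV (fun k _ => mG k) mE.
  rewrite -bigcup_mkord => /(_ (@subset_refl _ _)) /le_trans; apply.
  rewrite (eq_bigr (fun j : 'I_NV => (if (j < NU)%N then c else b)%:E)); last first.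
    move=> j _; rewrite /G.
    have mW : measurable (if (j < NU)%N then U `\` V else V) by case: ifP.
    have := iter_pre_mu mf inv j mW => /= ->.
    by case: ifP.
  rewrite sumEFin lee_fin -(big_mkord xpredT (fun j => if (j < NU)%N then c else b)).
  rewrite (big_cat_nat (n:=NU)) //.
  apply: lerD.
    rewrite (eq_big_nat _ _ (F2 := fun=> c)); last by move=> i /andP[_ ->].
    by rewrite sumr_const_nat subn0 mulr_natr.
  rewrite (eq_big_nat _ _ (F2 := fun=> b)); last first.
    by move=> i /andP[h _]; rewrite ltnNge h.
  by rewrite sumr_const_nat -natrB // mulr_natr.
have key x : ~ E x -> zeta mu f tau U x = zeta mu f tau V x.
  move=> nE.
  have nG j : (j < NV)%N -> ~ G j x by move=> jN Gj; apply: nE; exists j.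
  rewrite /zeta -/a -/b -/NU -/NV.
  rewrite -(big_mkord xpredT (fun j => (\1_U (iter j f x) : R))).
  rewrite -(big_mkord xpredT (fun j => (\1_V (iter j f x) : R))).
  rewrite (big_cat_nat (n:=NU) (p:=NV)) //.
  rewrite [X in _ = _ X](eq_big_nat _ _ (F2 := fun=> 0)); last first.
    move=> i /andP[h1 h2]; have := nG i h2; rewrite /G ltnNge h1 /=.
    by move=> nV; rewrite indicE memNset.
  rewrite big1_eq Monoid.mulm1.
  apply: eq_big_nat => i /andP[_ h]; have := nG i (leq_trans h NUV).
  rewrite /G h /= !indicE => nUV.
  have -> : (iter i f x \in U) = (iter i f x \in V); last by [].
  apply/idP/idP => /set_mem h'; apply/mem_set; last exact: VU.
  by apply: contrapT => nv; apply: nUV.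
set A := [set x | zeta mu f tau U x = k%:R].
set B := [set x | zeta mu f tau V x = k%:R].
have mA : measurable A by exact: zeta_meas.
have mB : measurable B by exact: zeta_meas.
have hA : mu A = (fine (mu A))%:E by rewrite fineK // fin_num_measure.
have hB : mu B = (fine (mu B))%:E by rewrite fineK // fin_num_measure.
have sub (X Y : set T) : measurable X -> measurable Y ->
    (forall x, ~ E x -> X x -> Y x) -> fine (mu X) <= fine (mu Y) + fine (mu E).
  move=> mX mY XY.
  have hX : mu X = (fine (mu X))%:E by rewrite fineK // fin_num_measure.
  have hY : mu Y = (fine (mu Y))%:E by rewrite fineK // fin_num_measure.
  rewrite -lee_fin EFinD -hX -hY -hE.
  apply: le_trans (measureU2 mu mY mE).
  apply: le_measure; rewrite ?inE //; first exact: measurableU.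
  move=> x Xx; have [Ex|nEx] := pselect (E x); [by right|left; exact: XY].
have h1 : fine (mu A) <= fine (mu B) + fine (mu E).
  by apply: sub => // x nEx; rewrite /A /B /= key.
have h2 : fine (mu B) <= fine (mu A) + fine (mu E).
  by apply: sub => // x nEx; rewrite /A /B /= key.
have t1 : NU%:R * c <= (tau / a + 1) * c by nra.
have t2 : (NV%:R - NU%:R) * b <= (tau / b + 1 - tau / a) * b by nra.
have t3 : tau * (c / a) = tau / a * c.
  by rewrite mulrA mulrAC.
rewrite ler_norml; apply/andP; split; nra.
Qed.

Theorem lemma5p6 (d : measure_display) (T : measurableType d) (R : realType)
  (mu : probability T R) (f : T -> T) (tau : R)
  (U V : nat -> set T) :
  measurable_fun setT f ->
  (forall A, measurable A -> mu (f @^-1` A) = mu A) ->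
  0 < tau ->
  (forall n, measurable (U n)) -> (forall n, measurable (V n)) ->
  (forall n, U n.+1 `<=` U n) -> (forall n, V n.+1 `<=` V n) ->
  (forall n, V n `<=` U n) ->
  (forall n, (0 < mu (V n))%E) ->
  (mu \o U) @ \oo --> 0%E ->
  (fun n => fine (mu (U n `\` V n)) / fine (mu (U n))) @ \oo --> 0 ->
  forall k : nat,
    (fun n => `| fine (mu [set x | zeta mu f tau (U n) x = k%:R])
               - fine (mu [set x | zeta mu f tau (V n) x = k%:R]) |) @ \oo --> 0.
Proof.
move=> mf inv tau0 mU mV _ _ VU mV0 cU cq k.
pose h n := 2 * tau * (fine (mu (U n `\` V n)) / fine (mu (U n))) + fine (mu (U n)).
have H1 : \forall n \near \oo, (fun=> 0 : R) n <= `| fine (mu [set x | zeta mu f tau (U n) x = k%:R])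
               - fine (mu [set x | zeta mu f tau (V n) x = k%:R]) | <= h n.
  by apply: nearW => n; rewrite normr_ge0 /=; exact: pointwise.
have H2 : h n @[n --> \oo] --> 0.
  have K := cvgD (cvgMl_tmp (a := 2 * tau) cq) (fine_cvg cU).
  rewrite mulr0 addr0 in K; exact: K.
exact: (squeeze_cvgr H1 (cvg_cst 0) H2).
Qed.
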